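(* Let $q$ be a prime power, let $n,k$ be integers with $3\le k\le n-2\le q-2$, and let $h=(k-1)+r$ with $k-1\le r\le q-k-1$. Let $\alpha_1,\dots,\alpha_n\in\mathbb{F}_q$ be pairwise distinct, let $G_{h,k}$ be the $k\times n$ matrix whose rows are $(\alpha_1^{e},\dots,\alpha_n^{e})$ for $e=0,1,\dots,k-2$ and $e=h$, let $\mathbf v=(v_1,\dots,v_n)\in(\mathbb{F}_q^* )^n$ and let $C_{h,\mathbf v}$ be the linear code generated by $G_{h,k}\cdot\mathrm{diag}(v_1,\dots,v_n)$. Let $u_i=\prod_{j\ne i}(\alpha_i-\alpha_j)^{-1}$ and $S_t=S_t(\alpha_1,\dots,\alpha_n)$. Then $C_{h,\mathbf v}$ is self-orthogonal if and only if there exists a polynomial $f(x)=\sum_{j=0}^{n-2k+2}f_jx^j\in\mathbb{F}_q[x]$ such that (1) $v_i^2=u_if(\alpha_i)$ for all $1\le i\le n$; (2) $\sum_{j=b}^{b+2r+1}f_jS_{j-b}=0$, where $b=n-2k-2r+1$; (3) for every $l$ with $(k-1)+r\le l\le(2k-3)+r$, $\sum_{j=s}^{s+l-2k+3}f_jS_{j-s}=0$, where $s=n-l-1$; here $f_j=0$ for $j<0$.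
   Context: Convention: $0^0=1$. $S_t(x_1,\dots,x_m)=\sum_{t_1+\dots+t_m=t,\ t_i\ge0}x_1^{t_1}\cdots x_m^{t_m}$ is the complete homogeneous symmetric polynomial of degree $t$ ($S_0=1$). A linear code $C$ is self-orthogonal if $C\subseteq C^\perp$ (Euclidean dual). *)

(* Defs.v *)
From HB Require Import structures.
From mathcomp Require Import all_boot all_order all_algebra all_field.
Set Implicit Arguments. Unset Strict Implicit. Unset Printing Implicit Defensive.
Import GRing.Theory.
Local Open Scope ring_scope.

(* Complete homogeneous symmetric polynomial S_t evaluated at x_1..x_n:
   sum over exponent vectors (t_1,..,t_n) with t_i >= 0, sum = t. *)
Definition Shom (F : fieldType) (n t : nat) (x : 'I_n -> F) : F :=
  \sum_(m : {ffun 'I_n -> 'I_t.+1} | (\sum_i (m i : nat))%N == t)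
     \prod_i x i ^+ (m i).

Definition coefz (F : fieldType) (f : {poly F}) (z : int) : F :=
  match z with Posz m => f`_m | Negz _ => 0 end.

Definition in_code (F : fieldType) (k n : nat) (M : 'M[F]_(k, n)) (x : 'rV[F]_n) :=
  (x <= M)%MS.

Definition in_dual (F : fieldType) (k n : nat) (M : 'M[F]_(k, n)) (y : 'rV[F]_n) :=
  forall x, in_code M x -> x *m y^T = 0.

Definition self_orthogonal (F : fieldType) (k n : nat) (M : 'M[F]_(k, n)) :=
  forall x, in_code M x -> in_dual M x.

Definition Ghk (F : fieldType) (k n h : nat) (alpha : 'I_n -> F) : 'M[F]_(k, n) :=
  \matrix_(i < k, j < n) alpha j ^+ (if (i < k.-1)%N then (i : nat) else h).

Definition uvec (F : fieldType) (n : nat) (alpha : 'I_n -> F) (i : 'I_n) : F :=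
  \prod_(j < n | j != i) (alpha i - alpha j)^-1.

(* Main.v *)
Require Import Defs.
From HB Require Import structures.
From mathcomp Require Import all_boot all_order all_algebra all_field.
From mathcomp Require Import zify ring.
Import GRing.Theory.
Local Open Scope ring_scope.
Section Core.
Variables (F : fieldType) (n : nat) (alpha : 'I_n -> F).
Hypothesis halpha : injective alpha.

Definition Tsum (A : {set 'I_n}) (p : nat) : F :=
  \sum_(i in A) alpha i ^+ p * \prod_(j in A | j != i) (alpha i - alpha j)^-1.

Definition Qp (N : nat) (a : F) : {poly F} := \sum_(e < N) (a *: 'X) ^+ e.
Definition Gp N (A : {set 'I_n}) := \prod_(i in A) Qp N (alpha i).
Definition Hc N A t := (Gp N A)`_t.

Lemma diff_neq0 {i j : 'I_n} : i != j -> alpha i - alpha j != 0.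
Proof. by move=> ij; rewrite subr_eq0; apply: contra ij => /eqP /halpha ->. Qed.

Lemma T_rec (A : {set _}) b p : b \in A ->
  Tsum A p.+1 = alpha b * Tsum A p + Tsum (A :\ b) p.
Proof.
move=> bA; suff -> : Tsum (A :\ b) p = Tsum A p.+1 - alpha b * Tsum A p.
  by rewrite addrC subrK.
rewrite /Tsum mulr_sumr -sumrB (big_setD1 b bA) /= mulrA -exprS subrr add0r.
apply: eq_bigr => i; rewrite in_setD1 => /andP [ib iA].
set P := \prod_(j in A | j != i) _.
rewrite exprS.
have -> : alpha i * alpha i ^+ p * P - alpha b * (alpha i ^+ p * P) =
   alpha i ^+ p * ((alpha i - alpha b) * P) by ring.
congr (_ * _); rewrite /P [in RHS](bigD1 b) /=; last by rewrite bA eq_sym.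
rewrite mulrA mulfV ?diff_neq0 // mul1r.
by apply: eq_bigl => j; rewrite in_setD1; case: (j == b); case: (j \in A); case: (j == i).
Qed.

Lemma Q_mul N a : (1 - a *: 'X) * Qp N a = 1 - (a *: 'X) ^+ N.
Proof.
have := subrXX 1 (a *: 'X : {poly F}) N; rewrite expr1n => ->.
by congr (_ * _); apply: eq_bigr => i _; rewrite expr1n mul1r.
Qed.

Lemma H_rec N (A : {set _}) b t : b \in A -> (t.+1 < N)%N ->
  Hc N A t.+1 = alpha b * Hc N A t + Hc N (A :\ b) t.+1.
Proof.
move=> bA tN; rewrite /Hc.
have E : (1 - alpha b *: 'X) * Gp N A = (1 - (alpha b *: 'X) ^+ N) * Gp N (A :\ b).
  by rewrite /Gp (big_setD1 b bA) /= mulrA Q_mul.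
have := congr1 (fun p : {poly F} => p`_t.+1) E.
rewrite !mulrBl !mul1r exprZn -!scalerAl !coefB !coefZ coefXM coefXnM /=.
rewrite ifT //.
by rewrite mulr0 subr0 => <-; rewrite addrC subrK.
Qed.

Lemma H0 N (A : {set _}) : (0 < N)%N -> Hc N A 0 = 1.
Proof.
move=> N0; rewrite /Hc /Gp -horner_coef0 horner_prod.
apply: big1 => i _; rewrite /Qp horner_sum.
case: N N0 => // N _; rewrite big_ord_recl /= expr0 hornerC big1 ?addr0 //.
by move=> j _; rewrite exprZn hornerZ hornerXn expr0n mulr0.
Qed.

Lemma Hset0 N t : Hc N set0 t = (t == 0)%:R.
Proof. by rewrite /Hc /Gp big_set0 coef1. Qed.

Lemma T_claim N : (0 < N)%N -> forall c (A : {set 'I_n}) p, #|A| = c -> (p.+1 < N + c)%N ->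
  Tsum A p = if (c <= p.+1)%N then Hc N A (p.+1 - c) else 0.
Proof.
move=> N0; elim=> [|c IH] A p.
  by move/cards0_eq => -> _; rewrite /Tsum big_set0 Hset0 subn0.
move=> cA.
have [b bA] : exists b, b \in A.
  by apply/set0Pn; apply/eqP => A0; rewrite A0 cards0 in cA.
have cAb : #|A :\ b| = c by move: cA; rewrite (cardsD1 b) bA add1n => -[].
elim: p => [|p IHp] hp.
  case: c IH cA cAb hp => [|c] IH cA cAb hp.
    rewrite /= H0 //.
    have -> : A = [set b].
      apply/eqP; rewrite eq_sym eqEcard sub1set bA cards1 cA //.
    rewrite /Tsum big_set1 expr0 mul1r big_pred0 // => j.
    by rewrite in_set1; case: (j == b).
  have [a aAb] : exists a, a \in A :\ b.
    by apply/set0Pn; apply/eqP => A0; rewrite A0 cards0 in cAb.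
  have aA : a \in A by move: aAb; rewrite in_setD1 => /andP [].
  have ab : a != b by move: aAb; rewrite in_setD1 => /andP [].
  have cAa : #|A :\ a| = c.+1 by move: cA; rewrite (cardsD1 a) aA add1n => -[].
  have e1 := T_rec A b 0 bA; rewrite (T_rec A a 0 aA) in e1.
  have ea := IH (A :\ a) 0 cAa ltac:(lia).
  have eb := IH (A :\ b) 0 cAb ltac:(lia).
  have eq : Tsum (A :\ a) 0 = Tsum (A :\ b) 0.
    rewrite ea eb; case: ifP => // c1.
    have -> : (1 - c.+1 = 0)%N by lia.
    by rewrite !H0.
  rewrite eq in e1.
  have e2 : (alpha a - alpha b) * Tsum A 0 = 0.
    rewrite mulrBl; apply/eqP; rewrite subr_eq0; apply/eqP.
    exact: (addIr (Tsum (A :\ b) 0)).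
  have -> : (c.+1 < 1)%N = false by [];  move/eqP: e2; rewrite mulf_eq0 (negbTE (diff_neq0 ab)) /= => /eqP //.
rewrite (T_rec A b p bA) IHp; last by lia.
rewrite (IH (A :\ b) p cAb); last by lia.
case: (ltngtP c.+1 p.+2) => h.
- rewrite ifT; last by lia.
  rewrite ifT; last by lia.
  have -> : (p.+2 - c.+1 = (p.+1 - c.+1).+1)%N by lia.
  have -> : (p.+1 - c = (p.+1 - c.+1).+1)%N by lia.
  by rewrite -H_rec //; lia.
- by rewrite ifF ?ifF ?mulr0 ?add0r //; lia.
- rewrite ifF; last by lia.
  rewrite ifT; last by lia.
  rewrite mulr0 add0r; have -> : (p.+1 - c = 0)%N by lia.
  have -> : (p.+2 - c.+1 = 0)%N by lia.
  by rewrite !H0.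
Qed.


Lemma Shom_H t : Shom t alpha = Hc (t.+1) setT t.
Proof.
rewrite /Hc /Gp /Qp.
have -> : \prod_(i in [set: 'I_n]) \sum_(e < t.+1) (alpha i *: 'X)^+e
   = \prod_i \sum_(e < t.+1) (alpha i *: 'X : {poly F})^+e.
  by apply: eq_bigl => i; rewrite in_setT.
rewrite bigA_distr_bigA /=.
have E : forall m : {ffun 'I_n -> 'I_t.+1}, \prod_i (alpha i *: 'X : {poly F})^+ (m i)
   = (\prod_i alpha i ^+ m i) *: 'X^(\sum_i (m i : nat)).
  move=> m; rewrite (eq_bigr (fun i => alpha i ^+ m i *: 'X^(m i))) => [|i _].
    by rewrite scaler_prod -expr_sum.
  by rewrite exprZn.
under eq_bigr => m _ do rewrite E.
rewrite coef_sumMXn /Shom; apply: eq_bigl => m //.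
Qed.

Lemma core p : \sum_i alpha i ^+ p * uvec alpha i =
  if (n <= p.+1)%N then Shom (p.+1 - n) alpha else 0.
Proof.
have -> : \sum_i alpha i ^+ p * uvec alpha i = Tsum setT p.
  rewrite /Tsum; symmetry; rewrite (eq_bigl (fun i => true)) => [|i]; last by rewrite in_setT.
  apply: eq_bigr => i _; congr (_ * _); rewrite /uvec.
  by apply: eq_bigl => j; rewrite in_setT.
rewrite (@T_claim (p.+1 - n).+1 erefl n); last by lia.
  by case: ifP => // _; rewrite Shom_H.
by rewrite cardsT card_ord.
Qed.


Definition Au p := \sum_i alpha i ^+ p * uvec alpha i.

Lemma sum_f (f : {poly F}) m :
  \sum_i (uvec alpha i * f.[alpha i]) * alpha i ^+ m =
  \sum_(j < size f) f`_j * Au (j + m).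
Proof.
under eq_bigr => i _ do rewrite horner_coef mulr_sumr mulr_suml.
rewrite exchange_big /=; apply: eq_bigr => j _.
rewrite /Au mulr_sumr; apply: eq_bigr => i _; rewrite exprD; ring.
Qed.

Lemma sum_widen (f : {poly F}) (G : nat -> F) K : (size f <= K)%N ->
  \sum_(j < size f) f`_j * G j = \sum_(j < K) f`_j * G j.
Proof.
move=> hK; rewrite (big_ord_widen _ (fun j : nat => f`_j * G j) hK) big_mkcond; apply: eq_bigr => j _.
by case: ifP => // /negbT; rewrite -leqNgt => h; rewrite nth_default // mul0r.
Qed.

Lemma coefz_neg (f : {poly F}) (z : int) : (z < 0)%R -> coefz f z = 0.
Proof. by case: z. Qed.

Lemma reindex (f : {poly F}) m L :
  ((size f)%:Z <= n%:Z - m%:Z - 1 + L%:Z)%R ->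
  \sum_(j < size f) f`_j * Au (j + m) =
  \sum_(t < L) coefz f (n%:Z - m%:Z - 1 + t%:Z) * Shom t alpha.
Proof.
move=> hs.
case Es: (n%:Z - m%:Z - 1)%R => [s'|c].
  rewrite Es in hs.
  rewrite (@sum_widen f (fun j => Au (j + m)) (s' + L)); last by lia.
  rewrite big_split_ord /= big1 ?add0r => [|j _]; last first.
    rewrite /Au core ifF ?mulr0 //; have := ltn_ord j; lia.
  apply: eq_bigr => t _; rewrite /Au core ifT; last by lia.
  congr (_ * Shom _ _); lia.
rewrite Es in hs.
have eL : L = (c.+1 + (L - c.+1))%N by lia.
rewrite eL big_split_ord /= [X in _ = X + _]big1 ?add0r => [|t _]; last first.
  rewrite coefz_neg ?mul0r //; have := ltn_ord t; lia.
rewrite (@sum_widen f (fun j => Au (j + m)) (L - c.+1)); last by lia.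
apply: eq_bigr => t _; rewrite /Au core ifT; last by lia.
have -> : (Negz c + (c.+1 + t)%:Z = Posz t)%R by lia.
rewrite /=; congr (_ * Shom _ _); lia.
Qed.

End Core.
Arguments Au {F n}.

Section Main.
Variables (F : fieldType) (n k r h : nat).
Hypotheses (hk3 : (3 <= k)%N) (hkn : (k <= n - 2)%N)
  (hh : h = (k - 1 + r)%N) (hr1 : (k - 1 <= r)%N).
Variables (alpha : 'I_n -> F) (v : 'I_n -> F).
Hypothesis halpha : injective alpha.

Let M := Ghk k h alpha *m diag_mx (\row_j v j).
Definition ex (a : 'I_k) : nat := if (a < k.-1)%N then (a : nat) else h.
Definition W m := \sum_i v i ^+ 2 * alpha i ^+ m.

Lemma MM a b : (M *m M^T) a b = W (ex a + ex b).
Proof.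
rewrite /M /W mul_mx_diag !mxE; apply: eq_bigr => j _.
rewrite !mxE exprD /ex; ring.
Qed.

Lemma SO_iff : self_orthogonal M <-> M *m M^T = 0.
Proof.
split.
  move=> H; apply/matrixP => a b.
  have := H (row b M) (row_sub b M) (row a M) (row_sub a M).
  move/matrixP/(_ 0 0); rewrite [X in _ = X]mxE => E; rewrite [RHS]mxE -E !mxE.
  by apply: eq_bigr => j _; rewrite !mxE.
move=> MM0 x /submxP [c ->] y /submxP [d ->].
by rewrite trmx_mul mulmxA -(mulmxA d) MM0 mulmx0 mul0mx.
Qed.

Lemma SO_W : self_orthogonal M <-> forall a b, W (ex a + ex b) = 0.
Proof.
rewrite SO_iff; split.
  by move=> MM0 a b; rewrite -MM MM0 mxE.
by move=> HW; apply/matrixP => a b; rewrite MM HW mxE.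
Qed.

Lemma Shom0 : Shom 0 alpha = 1.
Proof. by rewrite Shom_H H0. Qed.

Lemma W_f (f : {poly F}) m : (forall i, v i ^+ 2 = uvec alpha i * f.[alpha i]) ->
  W m = \sum_(j < size f) f`_j * Au alpha (j + m).
Proof.
by move=> hv; rewrite -sum_f /W; apply: eq_bigr => i _; rewrite hv.
Qed.

Lemma cond_lemma (f : {poly F}) m L : (size f <= n + 3 - 2 * k)%N ->
  (n%:Z - m%:Z - 1 + L%:Z = n%:Z + 3 - 2 * k%:Z)%R ->
  \sum_(j < size f) f`_j * Au alpha (j + m) =
  \sum_(t < L) coefz f (n%:Z - m%:Z - 1 + t%:Z) * Shom t alpha.
Proof.
move=> hs hL; case: (posnP (size f)) => s0.
  move: (s0) => /eqP; rewrite size_poly_eq0 => /eqP ->.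
  rewrite size_poly0 big_ord0 big1 // => t _.
  by case: (_ + _)%R => [m'|m']; rewrite /= ?coef0 mul0r.
by apply: reindex => //; lia.
Qed.

Lemma ex_lt (a : 'I_k) : (a < k.-1)%N -> ex a = a.
Proof. by rewrite /ex => ->. Qed.

Lemma k1 : (k.-1 < k)%N. Proof. lia. Qed.

Lemma ex_cases a b : (ex a + ex b <= 2 * k - 4)%N \/
  (exists x, (x <= k - 2)%N /\ (ex a + ex b = h + x)%N) \/ (ex a + ex b = h + h)%N.
Proof.
rewrite /ex; have := ltn_ord a; have := ltn_ord b.
case: ifP => ha; case: ifP => hb => ? ?.
- by left; lia.
- by right; left; exists (nat_of_ord a); split; lia.
- by right; left; exists (nat_of_ord b); split; lia.
- by right; right.
Qed.

Lemma ex_last : ex (Ordinal k1) = h.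
Proof. by rewrite /ex /= ltnn. Qed.

Hypothesis HW : forall a b, W (ex a + ex b) = 0.

Lemma W_small m : (m <= 2 * k - 4)%N -> W m = 0.
Proof.
move=> hm.
have ha : (minn m (k - 2) < k)%N by lia.
have hb : (m - minn m (k - 2) < k)%N by lia.
have ea : ex (Ordinal ha) = minn m (k - 2) by apply: ex_lt => /=; lia.
have eb : ex (Ordinal hb) = (m - minn m (k - 2))%N by apply: ex_lt => /=; lia.
have := HW (Ordinal ha) (Ordinal hb); rewrite ea eb.
by have -> : (minn m (k - 2) + (m - minn m (k - 2)) = m)%N by lia.
Qed.

Lemma W_mid x : (x <= k - 2)%N -> W (h + x) = 0.
Proof.
move=> hx; have ha : (x < k)%N by lia.
have ea : ex (Ordinal ha) = x by apply: ex_lt => /=; lia.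
by have := HW (Ordinal k1) (Ordinal ha); rewrite ea ex_last.
Qed.

Lemma W_top : W (h + h) = 0.
Proof. by have := HW (Ordinal k1) (Ordinal k1); rewrite ex_last. Qed.

End Main.

Theorem theorem4p12 (F : finFieldType) (n k r h : nat)
  (hk3 : (3 <= k)%N) (hkn : (k <= n - 2)%N) (hnq : (n - 2 <= #|F| - 2)%N)
  (hh : h = (k - 1 + r)%N) (hr1 : (k - 1 <= r)%N) (hr2 : (r <= #|F| - k - 1)%N)
  (alpha : 'I_n -> F) (halpha : injective alpha)
  (v : 'I_n -> F) (hv : forall i, v i != 0) :
  self_orthogonal (Ghk k h alpha *m diag_mx (\row_j v j)) <->
  exists f : {poly F},
    (size f <= n + 3 - 2 * k)%N /\
    (forall i, v i ^+ 2 = uvec alpha i * f.[alpha i]) /\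
    (let b : int := n%:Z - 2 * k%:Z - 2 * r%:Z + 1 in
     \sum_(t < (2 * r + 2)%N) coefz f (b + t%:Z) * Shom t alpha = 0) /\
    (forall l : nat, (k - 1 + r <= l)%N -> (l <= 2 * k - 3 + r)%N ->
       let s : int := n%:Z - l%:Z - 1 in
       \sum_(t < (l + 4 - 2 * k)%N) coefz f (s + t%:Z) * Shom t alpha = 0).
Proof.
have CL := @cond_lemma _ _ _ _ _ hk3 hkn hh hr1 _ halpha.
split.
  move=> /SO_W HW.
  pose g := \sum_i v i ^+ 2 *: \prod_(j < n | j != i) ('X - (alpha j)%:P).
  have hg : forall l, v l ^+ 2 = uvec alpha l * g.[alpha l].
    move=> l; rewrite /g horner_sum (bigD1 l) //= [X in _ + X]big1 ?addr0 => [|i il].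
      rewrite hornerZ horner_prod /uvec prodfV.
      have -> : \prod_(j < n | j != l) ('X - (alpha j)%:P).[alpha l] = \prod_(j < n | j != l) (alpha l - alpha j) by apply: eq_bigr => j _; rewrite hornerXsubC.
      rewrite mulrCA mulVf ?mulr1 //; apply/prodf_neq0 => j jl.
      by apply: (@diff_neq0 _ _ _ halpha); rewrite eq_sym.
    rewrite hornerZ horner_prod (bigD1 l) /=; last by rewrite eq_sym.
    by rewrite hornerXsubC subrr mul0r mulr0.
  have sg : (size g <= n)%N.
    rewrite /g; apply: (leq_trans (size_sum _ _ _)); apply/bigmax_leqP => i _.
    apply: (leq_trans (size_scale_leq _ _)).
    rewrite size_prod => [|j _]; last by rewrite -size_poly_eq0 size_XsubC.
    under eq_bigr do rewrite size_XsubC.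
    rewrite sum_nat_const.
    have := cardC1 i; rewrite card_ord /predC1 => hc.
    have hc2 : #|(fun j : 'I_n => j != i)| = n.-1 by rewrite -hc.
    rewrite hc2; lia.
  have sg2 : (size g <= n + 3 - 2 * k)%N.
    rewrite leqNgt; apply/negP => hgt.
    have [N' eN] : exists N', size g = N'.+1 by exists (size g).-1; lia.
    have gW := @W_small _ _ _ _ _ hk3 hkn hh hr1 _ _ HW (n - size g) ltac:(lia).
    rewrite (@W_f _ _ _ _ _ _ hg) eN big_ord_recr /= big1 ?add0r in gW => [|j _]; last first.
      rewrite /Au (@core _ _ _ halpha) ifF ?mulr0 //; have := ltn_ord j; lia.
    rewrite /Au (@core _ _ _ halpha) ifT in gW; last by lia.
    have e0 : ((N' + (n - N'.+1)).+1 - n = 0)%N by lia.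
    rewrite e0 Shom0 mulr1 in gW.
    have : lead_coef g != 0 by rewrite lead_coef_eq0 -size_poly_eq0 eN.
    by rewrite lead_coefE eN /= gW eqxx.
  exists g; split => //; split => //; split.
    move=> b; rewrite /b.
    have -> : (n%:Z - 2 * k%:Z - 2 * r%:Z + 1 = n%:Z - (h + h)%N%:Z - 1)%R by lia.
    rewrite -CL //; last by lia.
    by rewrite -(@W_f _ _ _ _ _ _ hg); apply: (@W_top _ _ _ _ _ hk3 hkn hh hr1 _ _ HW).
  move=> l hl1 hl2 s; rewrite /s -CL //; last by lia.
  rewrite -(@W_f _ _ _ _ _ _ hg); have -> : l = (h + (l - h))%N by lia.
  by apply: (@W_mid _ _ _ _ _ hk3 hkn hh hr1 _ _ HW); lia.
case=> f [sf [hv2 [h2 h3]]].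
apply/SO_W => a b.
case: (@ex_cases _ _ _ _ hk3 hkn hh hr1 a b) => [hs | [[x [hx E]] | E]];
  [ | rewrite E | rewrite E]; rewrite (@W_f _ _ _ _ _ _ hv2).
- apply: big1 => j _; rewrite /Au (@core _ _ _ halpha) ifF ?mulr0 //; have := leq_trans (ltn_ord j) sf; clear h2 h3; lia.
- rewrite (CL f _ ((h + x) + 4 - 2 * k)%N) //; last by lia.
  by have := h3 (h + x)%N ltac:(lia) ltac:(lia); move=> /= ->.
- rewrite (CL f _ (2 * r + 2)%N) //; last by lia.
  move: h2 => /=.
  have -> : (n%:Z - 2 * k%:Z - 2 * r%:Z + 1 = n%:Z - (h + h)%N%:Z - 1)%R by lia.
  by move=> ->.
Qed.
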